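(* Let $\mathcal{V}$ be a non-trivial quantale and $\mathsf{F}\colon\mathbf{Set}\to\mathbf{Set}$ a functor. Let $\Lambda$ be a class of natural transformations $\lambda\colon\mathbf{Cat}(\mathcal{V})(-,A_\lambda)\to\mathbf{Set}(\mathsf{F}|-|,|B_\lambda|)$, where $A_\lambda,B_\lambda$ are $\mathcal{V}$-categories and each $A_\lambda$ is injective in $\mathbf{Cat}(\mathcal{V})$ with respect to initial morphisms. Then the topological lifting of $\mathsf{F}$ with respect to $\Lambda$ is Kantorovich.
   Context: A quantale $(\mathcal{V},\otimes,k)$ is a complete lattice with commutative monoid structure, each $u\otimes-$ preserving joins, $\hom(u,-)$ its right adjoint; non-trivial: $\bot\ne\top$. $\mathcal{V}$-categories $(X,a)$: $k\le a(x,x)$, $a(x,y)\otimes a(y,z)\le a(x,z)$; $\mathcal{V}$-functors: $a(x,y)\le b(fx,fy)$; initial if equality; category $\mathbf{Cat}(\mathcal{V})$ with forgetful functor $|-|$. $A$ is injective w.r.t. initial morphisms if for every initial $\mathcal{V}$-functor $i\colon X\to Y$ and $\mathcal{V}$-functor $f\colon X\to A$ there is a $\mathcal{V}$-functor $g\colon Y\to A$ with $g\cdot i=f$. The topological lifting of $\mathsf{F}$ w.r.t. $\Lambda$ sends a $\mathcal{V}$-category $X$ to $\mathsf{F}|X|$ equipped with the initial structure $c(\mathfrak{x},\mathfrak{y})=\bigwedge b_\lambda(\lambda_X(f)(\mathfrak{x}),\lambda_X(f)(\mathfrak{y}))$ (meet over $\lambda\in\Lambda$ and $\mathcal{V}$-functors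 $f\colon X\to A_\lambda$, with $b_\lambda$ the structure of $B_\lambda$), acting as $\mathsf{F}$ on maps. $\mathcal{V}$ denotes $(\mathcal{V},\hom)$, $\mathcal{V}^\kappa$ has $[f,g]=\bigwedge_i\hom(f(i),g(i))$. A $\kappa$-ary $\mathcal{V}$-valued predicate lifting for $\mathsf{F}$ is a natural transformation $\mathbf{Set}(-,\mathcal{V}^\kappa)\to\mathbf{Set}(\mathsf{F}-,\mathcal{V})$; the Kantorovich lifting $\mathsf{F}^{\Lambda'}$ of a class $\Lambda'$ of these sends $(X,a)$ to $\mathsf{F}X$ with structure $\bigwedge\hom(\lambda_X(f)(\mathfrak{x}),\lambda_X(f)(\mathfrak{y}))$ over $\kappa$-ary $\lambda\in\Lambda'$ and $\mathcal{V}$-functors $f\colon(X,a)\to\mathcal{V}^\kappa$; a lifting is Kantorovich if it equals $\mathsf{F}^{\Lambda'}$ for some class $\Lambda'$. *)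

(* Defs.v *)
Set Implicit Arguments.
Unset Strict Implicit.

Record Quantale : Type := Build_Quantale {
  qcar :> Type;
  qle : qcar -> qcar -> Prop;
  qsup : (qcar -> Prop) -> qcar;
  qtens : qcar -> qcar -> qcar;
  qk : qcar;
  qhom : qcar -> qcar -> qcar;
  qle_refl : forall u, qle u u;
  qle_trans : forall u v w, qle u v -> qle v w -> qle u w;
  qle_antisym : forall u v, qle u v -> qle v u -> u = v;
  qsup_ub : forall (S : qcar -> Prop) u, S u -> qle u (qsup S);
  qsup_least : forall (S : qcar -> Prop) w, (forall u, S u -> qle u w) -> qle (qsup S) w;
  qtensA : forall u v w, qtens u (qtens v w) = qtens (qtens u v) w;
  qtensC : forall u v, qtens u v = qtens v u;
  qtens1 : forall u, qtens qk u = u;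
  qtens_sup : forall u (S : qcar -> Prop),
      qtens u (qsup S) = qsup (fun w => exists v, S v /\ w = qtens u v);
  qhom_adj : forall u v w, qle (qtens u v) w <-> qle v (qhom u w)
}.
Arguments qle {q} _ _.
Arguments qsup {q} _.
Arguments qtens {q} _ _.
Arguments qk {q}.
Arguments qhom {q} _ _.

Definition qbot (V : Quantale) : V := qsup (fun _ => False).
Definition qtop (V : Quantale) : V := qsup (fun _ => True).
Definition qinf (V : Quantale) (S : V -> Prop) : V :=
  qsup (fun x => forall s, S s -> qle x s).
Definition qinf_fam (V : Quantale) (I : Type) (f : I -> V) : V :=
  qinf (fun v => exists i, v = f i).
Definition nontrivial (V : Quantale) : Prop := qbot V <> qtop V.

Record VCat (V : Quantale) : Type := Build_VCat {
  vob :> Type;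
  vhom : vob -> vob -> V;
  vcat_refl : forall x, qle qk (vhom x x);
  vcat_trans : forall x y z, qle (qtens (vhom x y) (vhom y z)) (vhom x z)
}.
Arguments vhom {V} _ _ _.

Definition is_vfunctor (V : Quantale) (X Y : VCat V) (f : X -> Y) : Prop :=
  forall x y, qle (vhom X x y) (vhom Y (f x) (f y)).

Record VFun (V : Quantale) (X Y : VCat V) : Type := Build_VFun {
  vfun :> X -> Y;
  vfunP : is_vfunctor vfun
}.

Lemma vfcomp_proof (V : Quantale) (X Y Z : VCat V) (g : VFun Y Z) (f : VFun X Y) :
  is_vfunctor (fun x => g (f x)).
Proof.
  intros x y. eapply qle_trans. apply (vfunP f). apply (vfunP g).
Qed.

Definition vfcomp (V : Quantale) (X Y Z : VCat V) (g : VFun Y Z) (f : VFun X Y)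
  : VFun X Z := Build_VFun (vfcomp_proof g f).

Definition is_initial (V : Quantale) (X Y : VCat V) (f : X -> Y) : Prop :=
  forall x y, vhom Y (f x) (f y) = vhom X x y.

Definition inj_initial (V : Quantale) (A : VCat V) : Prop :=
  forall (X Y : VCat V) (i : VFun X Y), is_initial i ->
  forall f : VFun X A, exists g : VFun Y A, forall x, g (i x) = f x.

Record SetFunctor : Type := Build_SetFunctor {
  Fob :> Type -> Type;
  Fmap : forall (X Y : Type), (X -> Y) -> Fob X -> Fob Y;
  Fmap_id : forall (X : Type) (t : Fob X), Fmap (fun x : X => x) t = t;
  Fmap_comp : forall (X Y Z : Type) (f : X -> Y) (g : Y -> Z) (t : Fob X),
      Fmap (fun x => g (f x)) t = Fmap g (Fmap f t)
}.
Arguments Fmap {s X Y} _ _.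

(** * A class Λ of natural transformations
      λ : Cat(V)(-, A_λ) -> Set(F|-|, |B_λ|), indexed by a type. *)
Record LiftingClass (V : Quantale) (F : SetFunctor) : Type := Build_LiftingClass {
  lc_idx : Type;
  lc_A : lc_idx -> VCat V;
  lc_B : lc_idx -> VCat V;
  lc_nat : forall (l : lc_idx) (X : VCat V), VFun X (lc_A l) -> F X -> lc_B l;
  lc_natural : forall (l : lc_idx) (X Y : VCat V) (h : VFun X Y)
      (f : VFun Y (lc_A l)) (t : F X),
      @lc_nat l X (vfcomp f h) t = @lc_nat l Y f (Fmap h t)
}.
Arguments lc_nat {V F} _ _ {X} _ _ : rename.
Arguments lc_A {V F} _ _ : rename.
Arguments lc_B {V F} _ _ : rename.

(** Structure of the topological lifting of F w.r.t. Λ on F|X|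
    (it acts as F on maps). *)
Definition top_hom (V : Quantale) (F : SetFunctor) (L : LiftingClass V F)
  (X : VCat V) (s t : F X) : V :=
  qinf_fam (fun p : {l : lc_idx L & VFun X (lc_A L l)} =>
    vhom (lc_B L (projT1 p)) (lc_nat L (projT1 p) (projT2 p) s)
                             (lc_nat L (projT1 p) (projT2 p) t)).

Record PredLiftingClass (V : Quantale) (F : SetFunctor) : Type := Build_PLC {
  pl_idx : Type;
  pl_ar : pl_idx -> Type;
  pl_lift : forall (j : pl_idx) (X : Type), (X -> (pl_ar j -> V)) -> F X -> V;
  pl_natural : forall (j : pl_idx) (X Y : Type) (h : X -> Y)
      (g : Y -> (pl_ar j -> V)) (t : F X),
      @pl_lift j X (fun x => g (h x)) t = @pl_lift j Y g (Fmap h t)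
}.
Arguments pl_lift {V F} _ _ {X} _ _ : rename.
Arguments pl_ar {V F} _ _ : rename.

Definition Vpow_hom (V : Quantale) (K : Type) (f g : K -> V) : V :=
  qinf_fam (fun i : K => qhom (f i) (g i)).

Definition is_vfunctor_pow (V : Quantale) (X : VCat V) (K : Type)
  (f : X -> (K -> V)) : Prop :=
  forall x y, qle (vhom X x y) (Vpow_hom (f x) (f y)).

Definition kant_hom (V : Quantale) (F : SetFunctor) (P : PredLiftingClass V F)
  (X : VCat V) (s t : F X) : V :=
  qinf_fam (fun p : {j : pl_idx P & {f : X -> (pl_ar P j -> V) | is_vfunctor_pow f}} =>
    qhom (pl_lift P (projT1 p) (proj1_sig (projT2 p)) s)
         (pl_lift P (projT1 p) (proj1_sig (projT2 p)) t)).

(** A lifting of F (given by its structures on F|X|, acting as F on maps)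
    is Kantorovich if it equals F^{Λ'} for some class Λ'. *)
Definition is_Kantorovich (V : Quantale) (F : SetFunctor)
  (c : forall X : VCat V, F X -> F X -> V) : Prop :=
  exists P : PredLiftingClass V F,
    forall (X : VCat V) (s t : F X), c X s t = @kant_hom V F P X s t.

(* Main.v *)
Require Import Defs.
From Stdlib Require Import ClassicalEpsilon FunctionalExtensionality ProofIrrelevance.
Set Implicit Arguments.
Unset Strict Implicit.

Section Aux.
Variable V : Quantale.

Lemma tens_mono (c a b : V) : qle a b -> qle (qtens c a) (qtens c b).
Proof.
  intros H.
  assert (E : b = qsup (fun x => x = a \/ x = b)).
  { apply qle_antisym. apply qsup_ub. now right.
    apply qsup_least. intros u [->| ->]; auto using qle_refl. }
  rewrite E, qtens_sup. apply qsup_ub. exists a. split; auto.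
Qed.

Lemma tens_k (u : V) : qtens u qk = u.
Proof. rewrite qtensC. apply qtens1. Qed.

Lemma counit (u w : V) : qle (qtens u (qhom u w)) w.
Proof. apply (proj2 (qhom_adj _ _ _)). apply qle_refl. Qed.

Lemma inf_lb (S : V -> Prop) s : S s -> qle (qinf S) s.
Proof. intros Hs. apply qsup_least. intros u Hu. now apply Hu. Qed.

Lemma inf_gl (S : V -> Prop) w : (forall s, S s -> qle w s) -> qle w (qinf S).
Proof. intros H. apply qsup_ub. exact H. Qed.

Lemma fam_lb (I : Type) (f : I -> V) i : qle (qinf_fam f) (f i).
Proof. apply inf_lb. now exists i. Qed.

Lemma fam_gl (I : Type) (f : I -> V) w : (forall i, qle w (f i)) -> qle w (qinf_fam f).
Proof. intros H. apply inf_gl. intros s [i ->]. apply H. Qed.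
Arguments fam_lb {I} f i.
Lemma fam_lb' (I : Type) (f : I -> V) i w : w = f i -> qle (qinf_fam f) w.
Proof. intros ->. apply fam_lb. Qed.
Arguments fam_gl {I} f w.

Lemma yoneda (C : VCat V) (u v : C) :
  Vpow_hom (fun z => vhom C z u) (fun z => vhom C z v) = vhom C u v.
Proof.
  apply qle_antisym.
  - eapply qle_trans. apply (fam_lb _ u).
    eapply qle_trans. 2: apply (counit (vhom C u u)).
    rewrite <- (qtens1 (qhom _ _)) at 1.
    rewrite (qtensC qk), (qtensC (vhom C u u)).
    apply tens_mono. apply vcat_refl.
  - apply fam_gl. intros z. apply (proj1 (qhom_adj _ _ _)). apply vcat_trans.
Qed.

Lemma Vpow_refl (K : Type) (f : K -> V) : qle qk (Vpow_hom f f).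
Proof. apply fam_gl. intros i. apply (proj1 (qhom_adj _ _ _)). rewrite tens_k. apply qle_refl. Qed.

Lemma Vpow_trans (K : Type) (f g h : K -> V) :
  qle (qtens (Vpow_hom f g) (Vpow_hom g h)) (Vpow_hom f h).
Proof.
  apply fam_gl. intros i. apply (proj1 (qhom_adj _ _ _)). rewrite qtensA.
  assert (H1 : qle (qtens (f i) (Vpow_hom f g)) (g i)).
  { eapply qle_trans. apply tens_mono. apply (fam_lb _ i). apply counit. }
  rewrite qtensC. eapply qle_trans. apply tens_mono. exact H1.
  rewrite qtensC. eapply qle_trans. apply tens_mono. apply (fam_lb _ i). apply counit.
Qed.

Definition Vpow_cat (K : Type) : VCat V :=
  Build_VCat (@Vpow_refl K) (@Vpow_trans K).

Definition indcat (K X : Type) (g : X -> (K -> V)) : VCat V :=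
  @Build_VCat V X (fun x y => Vpow_hom (g x) (g y))
    (fun x => Vpow_refl (g x)) (fun x y z => Vpow_trans (g x) (g y) (g z)).

Definition gfun (K X : Type) (g : X -> (K -> V)) : VFun (indcat g) (Vpow_cat K) :=
  @Build_VFun V (indcat g) (Vpow_cat K) g (fun x y => qle_refl _).

Lemma VFun_ext (X Y : VCat V) (f g : VFun X Y) : (forall x, f x = g x) -> f = g.
Proof.
  destruct f as [f fp], g as [g gp]; simpl. intros H.
  assert (f = g) by (apply functional_extensionality; exact H). subst.
  f_equal. apply proof_irrelevance.
Qed.

Lemma yon_proof (C : VCat V) : is_vfunctor (X:=C) (Y:=Vpow_cat C) (fun x z => vhom C z x).
Proof. intros x y. simpl. rewrite yoneda. apply qle_refl. Qed.

Definition yon (C : VCat V) : VFun C (Vpow_cat C) := Build_VFun (@yon_proof C).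

Lemma yon_initial (C : VCat V) : is_initial (yon C).
Proof. intros x y. simpl. apply yoneda. Qed.

Definition idv (C : VCat V) : VFun C C := @Build_VFun V C C (fun x => x) (fun x y => qle_refl _).

Lemma retr_ex (A : VCat V) : inj_initial A ->
  {r : VFun (Vpow_cat A) A | forall x, r (yon A x) = x}.
Proof.
  intros H. apply constructive_indefinite_description.
  destruct (H _ _ (yon A) (@yon_initial A) (idv A)) as [g Hg]. exists g. exact Hg.
Qed.

End Aux.

Theorem corollary1 (V : Quantale) (F : SetFunctor) (L : LiftingClass V F) :
  nontrivial V ->
  (forall l : lc_idx L, inj_initial (lc_A L l)) ->
  is_Kantorovich (top_hom L).
Proof.
  intros _ Hinj.
  pose (r := fun l => proj1_sig (retr_ex (Hinj l))).
  assert (rP : forall l x, r l (yon (lc_A L l) x) = x)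
    by (intros l x; exact (proj2_sig (retr_ex (Hinj l)) x)).
  pose (rf := fun l (X : Type) (g : X -> (lc_A L l -> V)) =>
                vfcomp (r l) (gfun g)).
  pose (pl := fun (j : {l : lc_idx L & lc_B L l}) (X : Type)
                  (g : X -> (lc_A L (projT1 j) -> V)) (t : F X) =>
     vhom (lc_B L (projT1 j)) (projT2 j) (lc_nat L (projT1 j) (rf (projT1 j) X g) t)).
  assert (plN : forall j (X Y : Type) (h : X -> Y) (g : Y -> (lc_A L (projT1 j) -> V)) (t : F X),
     pl j X (fun x => g (h x)) t = pl j Y g (Fmap h t)).
  { intros j X Y h g t. unfold pl.
    set (hv := @Build_VFun V (indcat (fun x => g (h x))) (indcat g) h (fun x y => qle_refl _)).
    pose proof (@lc_natural _ _ L (projT1 j) _ _ hv (rf (projT1 j) Y g) t) as E.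
    simpl in E. rewrite <- E. f_equal. f_equal. apply VFun_ext. reflexivity. }
  exists (@Build_PLC V F {l : lc_idx L & lc_B L l} (fun j => vob (lc_A L (projT1 j))) pl plN).
  intros X s t.
  assert (Key : forall (l : lc_idx L) (z : lc_B L l) (f : X -> (lc_A L l -> V))
                       (fp : is_vfunctor_pow f) (u : F X),
     pl (existT _ l z) X f u =
     vhom (lc_B L l) z (lc_nat L l (vfcomp (r l) (@Build_VFun V X (Vpow_cat V _) f fp)) u)).
  { intros l z f fp u. unfold pl; simpl.
    pose (iv := @Build_VFun V X (indcat f) (fun x => x) fp).
    pose proof (@lc_natural _ _ L l _ _ iv (rf l X f) u) as E.
    simpl in E. rewrite Fmap_id in E. rewrite <- E. f_equal. f_equal.
    apply VFun_ext. reflexivity. }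
  apply qle_antisym.
  - apply fam_gl. intros [[l z] [f fp]]. simpl. rewrite !(Key l z f fp).
    eapply qle_trans.
    apply (fam_lb _ (existT (fun l => VFun X (lc_A L l)) l
                      (vfcomp (r l) (@Build_VFun V X (Vpow_cat V _) f fp)))).
    simpl. rewrite <- yoneda. unfold Vpow_hom. apply (fam_lb' (i:=z)). reflexivity.
  - apply fam_gl. intros [l g]. simpl.
    rewrite <- yoneda. unfold Vpow_hom. apply fam_gl. intros z.
    assert (fp : is_vfunctor_pow (fun x => yon (lc_A L l) (g x))).
    { intros x y. simpl. rewrite yoneda. apply (vfunP g). }
    eapply qle_trans.
    apply (fam_lb _ (existT (fun j => {f : X -> (lc_A L (projT1 j) -> V) | is_vfunctor_pow f})
             (existT (fun l => lc_B L l) l z) (exist _ _ fp))).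
    simpl. rewrite !(Key l z _ fp).
    assert (Eg : vfcomp (r l) (@Build_VFun V X (Vpow_cat V _) _ fp) = g).
    { apply VFun_ext. intros x. simpl. apply rP. }
    rewrite Eg. apply qle_refl.
Qed.
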